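(* $z_2(4,4)=10$.
   Context: Double Zarankiewicz number: consider configurations $G=([m],[n],E_1\cup E_2)$ where $[m]=\{1,\dots,m\}$, $E_1\subseteq[m]\times[n]$ is a set of 1-edges (cells) and $E_2$ is a set of 2-edges $(i,j;k,l)$ with $i,k\in[m]$, $j,l\in[n]$, $i\ne k$, $j\ne l$; the cells $(i,j)$ and $(k,l)$ are the two halves of this 2-edge. Simplicity condition: the halves of all 2-edges are pairwise distinct cells and none of them belongs to $E_1$. A cell is occupied if it lies in $E_1$ or is a half of some 2-edge. $G$ contains a generalized $C_4$-cycle if (1) there are four 1-edges $(i,j),(i,l),(k,j),(k,l)\in E_1$ with $i\ne k$, $j\ne l$; or (2) there is a 2-edge $(i,j;k,l)\in E_2$ whose two opposite cells $(i,l)$ and $(k,j)$ are both occupied; or (3) there are a 2-edge $(i,j;p,q)\in E_2$ and a cell $(k,l)$ such that the five cells $(k,l),(k,j),(k,q),(i,l),(p,l)$ are pairwise distinct and all occupied. $z_2(m,n)$ is the maximum of $|E_1|+|E_2|$ over all such $G$ satisfying the simplicity condition and containing no generalized $C_4$-cycle. *)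

(* Defs.v *)
From mathcomp Require Import all_boot.
Set Implicit Arguments. Unset Strict Implicit. Unset Printing Implicit Defensive.

(* Rows are 'I_m (= {1..m} shifted to {0..m-1}), columns 'I_n. *)
Definition cell (m n : nat) := ('I_m * 'I_n)%type.

(* A 2-edge (i,j;k,l) is represented as the pair of its halves ((i,j),(k,l)). *)
Definition tedge (m n : nat) := (cell m n * cell m n)%type.

Definition config (m n : nat) := ({set cell m n} * {set tedge m n})%type.

Section Defs.
Variables m n : nat.
Implicit Types (G : config m n) (c : cell m n) (e : tedge m n).

Definition E1 G := G.1.
Definition E2 G := G.2.

Definition tedges_ok G : bool :=
  [forall e in E2 G, (e.1.1 != e.2.1) && (e.1.2 != e.2.2)].

Definition simple_config G : bool :=
  [forall e in E2 G, forall f in E2 G,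
     [&& (e.1 == f.1) ==> (e == f),
         (e.2 == f.2) ==> (e == f) &
         e.1 != f.2]] &&
  [forall e in E2 G, (e.1 \notin E1 G) && (e.2 \notin E1 G)].

Definition occupied G c : bool :=
  (c \in E1 G) || [exists e in E2 G, (c == e.1) || (c == e.2)].

Definition cycle1 G : bool :=
  [exists i : 'I_m, exists k : 'I_m, exists j : 'I_n, exists l : 'I_n,
    [&& i != k, j != l,
        (i, j) \in E1 G, (i, l) \in E1 G, (k, j) \in E1 G & (k, l) \in E1 G]].

Definition cycle2 G : bool :=
  [exists e in E2 G,
    occupied G (e.1.1, e.2.2) && occupied G (e.2.1, e.1.2)].

Definition cycle3 G : bool :=
  [exists e in E2 G, exists c : cell m n,
    let: ((i, j), (p, q)) := e in
    let: (k, l) := c in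
    let s := [:: (k, l); (k, j); (k, q); (i, l); (p, l)] in
    uniq s && all (occupied G) s].

Definition has_gen_C4 G : bool := [|| cycle1 G, cycle2 G | cycle3 G].

Definition admissible G : bool :=
  [&& tedges_ok G, simple_config G & ~~ has_gen_C4 G].

Definition weight G : nat := #|E1 G| + #|E2 G|.

End Defs.

Definition z2 (m n : nat) : nat :=
  \max_(G : config m n | admissible G) weight G.

(* Main.v *)
Require Import Defs.
From mathcomp Require Import all_boot zify.
Set Implicit Arguments. Unset Strict Implicit. Unset Printing Implicit Defensive.

Fixpoint hasL {T} (a : T -> bool) (s : seq T) : bool :=
  if s is x :: s' then (if a x then true else hasL a s') else false.
Fixpoint allL' {T} (a : T -> bool) (s : seq T) : bool :=
  if s is x :: s' then (if a x then allL' a s' else false) else true.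
Lemma hasLE T (a : T -> bool) s : hasL a s = has a s.
Proof. by elim: s => //= x s <-. Qed.
Lemma allLE T (a : T -> bool) s : allL' a s = all a s.
Proof. by elim: s => //= x s <-. Qed.

Definition i4 := iota 0 4.
Definition grid := seq (seq bool).
Definition lk (g : grid) (r c : nat) : bool := nth false (nth [::] g r) c.
Definition C4n (f : nat -> nat -> bool) : bool :=
  hasL (fun i => hasL (fun k => hasL (fun j => hasL (fun l =>
    if i == k then false else if j == l then false else
    if f i j then if f i l then if f k j then f k l else false else false else false) i4) i4) i4) i4.
Definition cyc3n (f : nat -> nat -> bool) (i j p q : nat) : bool :=
  hasL (fun k => hasL (fun l =>
    if uniq [:: (k, l); (k, j); (k, q); (i, l); (p, l)] then
     (if f k l then if f k j then if f k q then if f i l then f p l else false else false else false else false) else false) i4) i4.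
Definition goodn (f : nat -> nat -> bool) (i j p q : nat) : bool :=
  if i == p then false else if j == q then false else if f i j then if f p q then
    (if (if f i q then f p j else false) then false else ~~ cyc3n f i j p q) else false else false.
Definition pairsN : seq (nat * nat) := [seq (i, j) | i <- i4, j <- i4].
Definition edgesN : seq ((nat * nat) * (nat * nat)) := [seq (a, b) | a <- pairsN, b <- pairsN].
Definition goodE f (e : (nat * nat) * (nat * nat)) := goodn f e.1.1 e.1.2 e.2.1 e.2.2.
Definition cnt (g : grid) := sumn (map (count id) g).
Definition checkA g := if cnt g <= 9 then true else C4n (lk g).
Definition checkB g := if cnt g <= 13 then true else ~~ hasL (goodE (lk g)) edgesN.
Definition checkC g := if cnt g != 13 then true else
  (let gl := [seq e <- edgesN | goodE (lk g) e] in
   allL' (fun e => allL' (fun f => if uniq [:: e.1; e.2; f.1; f.2] then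
     C4n (fun r c => if lk g r c then ((r, c) \notin [:: e.1; e.2; f.1; f.2]) else false) else true) gl) gl).
Definition checkAll g := if checkA g then if checkB g then checkC g else false else false.
Fixpoint allL n : seq (seq bool) :=
  if n is n'.+1 then [seq b :: s | b <- [:: true; false], s <- allL n'] else [:: [::]].
Definition rowsL := allL 4.
Definition allG (P : grid -> bool) :=
  allL' (fun a => allL' (fun b => allL' (fun c => allL' (fun d => P [:: a; b; c; d]) rowsL) rowsL) rowsL) rowsL.

Definition gridOf (S : {set cell 4 4}) : grid :=
  [seq [seq (i, j) \in S | j <- enum 'I_4] | i <- enum 'I_4].

Lemma lk_gridOf S (i j : 'I_4) : lk (gridOf S) i j = ((i, j) \in S).
Proof.
rewrite /lk /gridOf (nth_map ord0) ?size_enum_ord // nth_ord_enum.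
by rewrite (nth_map ord0) ?size_enum_ord // nth_ord_enum.
Qed.

Lemma cnt_gridOf S : cnt (gridOf S) = #|S|.
Proof.
rewrite /cnt -map_comp sumnE big_map.
transitivity (\sum_(i : 'I_4) \sum_(j : 'I_4) (if (i, j) \in S then 1 else 0)).
  rewrite -big_enum /= (_ : enum xpredT = enum 'I_4); last by rewrite !enumT.
  apply: eq_bigr => i _.
  rewrite /= count_map -sumn_count sumnE big_map -big_enum /= (_ : enum xpredT = enum 'I_4); last by rewrite !enumT.
  by apply: eq_bigr => j _; case: ((i, j) \in S).
rewrite pair_big /= -sum1_card big_mkcond /=.
rewrite [RHS]big_mkcond /=. by apply: eq_bigr => -[i j] _.
Qed.

Lemma mem_allL n s : size s = n -> s \in allL n.
Proof.
elim: n s => [|n IH] [|b s] //= [Hs].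
have Hi : forall c : bool, injective (cons c) by move=> c x y [].
by case: b; rewrite !mem_cat (mem_map (Hi _)) (IH _ Hs) ?orbT.
Qed.

Lemma allL'_in (T : eqType) (a : T -> bool) s x : allL' a s -> x \in s -> a x.
Proof. by rewrite allLE => /allP; apply. Qed.

Lemma allG_ok P : allG P -> forall g : grid, size g = 4 -> all (fun r => size r == 4) g -> P g.
Proof.
move=> H [|a [|b [|c [|d [|]]]]] //= _ /and4P[/eqP Ha /eqP Hb /eqP Hc /andP[/eqP Hd _]].
move: (allL'_in H (mem_allL Ha)) => H1.
move: (allL'_in H1 (mem_allL Hb)) => H2.
move: (allL'_in H2 (mem_allL Hc)) => H3.
exact: (allL'_in H3 (mem_allL Hd)).
Qed.

Lemma gridOf_shape S : size (gridOf S) = 4 /\ all (fun r => size r == 4) (gridOf S).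
Proof.
split; first by rewrite size_map size_enum_ord.
by apply/allP => r /mapP [i _ ->]; rewrite size_map size_enum_ord.
Qed.

Lemma checkAll_ok : allG checkAll.
Proof. vm_compute. reflexivity. Qed.

Lemma checkAll_S S : checkAll (gridOf S).
Proof. have [H1 H2] := gridOf_shape S. exact: allG_ok checkAll_ok _ H1 H2. Qed.

Lemma ex_iota (P : 'I_4 -> bool) (Q : nat -> bool) :
  (forall i : 'I_4, P i = Q i) -> [exists i, P i] = hasL Q i4.
Proof.
move=> H; rewrite hasLE; apply/existsP/hasP => [[i Pi]|[r]].
  by exists (val i); [rewrite mem_iota /= ltn_ord | rewrite -H].
rewrite mem_iota /= => Hr Qr; exists (Ordinal Hr); by rewrite H.
Qed.

Lemma ex_pair (P : 'I_4 * 'I_4 -> bool) :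
  [exists c, P c] = [exists k, exists l, P (k, l)].
Proof.
apply/existsP/existsP => [[[k l] H]|[k /existsP [l H]]]; first by exists k; apply/existsP; exists l.
by exists (k, l).
Qed.

Definition np (c : cell 4 4) : nat * nat := (val c.1, val c.2).
Lemma np_inj : injective np.
Proof. by move=> [a b] [c d] [/val_inj -> /val_inj ->]. Qed.

Lemma C4_bridge (f : cell 4 4 -> bool) (fn : nat -> nat -> bool) :
  (forall i j : 'I_4, f (i, j) = fn i j) ->
  [exists i : 'I_4, exists k : 'I_4, exists j : 'I_4, exists l : 'I_4,
    [&& i != k, j != l, f (i, j), f (i, l), f (k, j) & f (k, l)]] = C4n fn.
Proof.
move=> Hf; apply: ex_iota => i; apply: ex_iota => k; apply: ex_iota => j; apply: ex_iota => l.
rewrite !Hf.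
rewrite (_ : (i != k) = (val i != val k)) // (_ : (j != l) = (val j != val l)) //.
by case: (val i == val k); case: (val j == val l); case: (fn i j); case: (fn i l); case: (fn k j).
Qed.

Lemma cyc3_bridge (f : cell 4 4 -> bool) (fn : nat -> nat -> bool) (i j p q : 'I_4) :
  (forall i j : 'I_4, f (i, j) = fn i j) ->
  [exists c : cell 4 4, let: (k, l) := c in
    let s := [:: (k, l); (k, j); (k, q); (i, l); (p, l)] in uniq s && all f s]
  = cyc3n fn i j p q.
Proof.
move=> Hf; rewrite ex_pair; apply: ex_iota => k; apply: ex_iota => l.
cbv zeta.
have -> : uniq [:: (k, l); (k, j); (k, q); (i, l); (p, l)] =
  uniq [:: (val k, val l); (val k, val j); (val k, val q); (val i, val l); (val p, val l)].
  by rewrite -(map_inj_uniq np_inj).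
rewrite [all f _]/= !Hf.
case: (uniq [:: (val k, val l); (val k, val j); (val k, val q); (val i, val l); (val p, val l)]) => //.
by case: (fn k l); case: (fn k j); case: (fn k q); case: (fn i l); case: (fn p l).
Qed.

Lemma simpleP (G : config 4 4) : simple_config G ->
  (forall e f, e \in E2 G -> f \in E2 G ->
     [/\ e.1 = f.1 -> e = f, e.2 = f.2 -> e = f & e.1 != f.2]) /\
  (forall e, e \in E2 G -> e.1 \notin E1 G /\ e.2 \notin E1 G).
Proof.
case/andP => /forallP S1 /forallP S2; split.
  move=> e f He Hf; move: (S1 e); rewrite He /= => /forallP /(_ f); rewrite Hf /=.
  by case/and3P => /implyP H1 /implyP H2 H3; split => // E; apply/eqP; [apply: H1 | apply: H2]; rewrite E.
by move=> e He; move: (S2 e); rewrite He /= => /andP.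
Qed.

Lemma okP (G : config 4 4) : tedges_ok G -> forall e, e \in E2 G -> e.1.1 != e.2.1 /\ e.1.2 != e.2.2.
Proof. by move=> /forallP H e He; move: (H e); rewrite He /= => /andP. Qed.

Lemma card_occ (G : config 4 4) : tedges_ok G -> simple_config G ->
  #|[set c | occupied G c]| = #|E1 G| + 2 * #|E2 G|.
Proof.
move=> Hok Hs; have [Sinj Snot] := simpleP Hs.
set H1 := [set e.1 | e in E2 G]; set H2 := [set e.2 | e in E2 G].
have -> : [set c | occupied G c] = E1 G :|: (H1 :|: H2).
  apply/setP => c; rewrite !inE /occupied; congr (_ || _).
  apply/existsP/orP => [[e /andP [He /orP [/eqP -> | /eqP ->]]]|[/imsetP [e He ->]|/imsetP [e He ->]]].
  - by left; apply/imsetP; exists e.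
  - by right; apply/imsetP; exists e.
  - by exists e; rewrite He eqxx.
  - by exists e; rewrite He eqxx orbT.
have c1 : #|H1| = #|E2 G|.
  by apply: card_in_imset => e f He Hf E; have [H _ _] := Sinj e f He Hf; apply: H.
have c2 : #|H2| = #|E2 G|.
  by apply: card_in_imset => e f He Hf E; have [_ H _] := Sinj e f He Hf; apply: H.
have d12 : H1 :&: H2 = set0.
  apply/setP => c; rewrite !inE; apply/negP => /andP [/imsetP [e He ->] /imsetP [f Hf E]].
  by have [_ _ /eqP] := Sinj e f He Hf.
have dA : E1 G :&: (H1 :|: H2) = set0.
  apply/setP => c; rewrite !inE; apply/negP => /andP [Hc /orP [/imsetP [e He E]|/imsetP [e He E]]];
  have [Ha Hb] := Snot e He; subst c; [by rewrite Hc in Ha | by rewrite Hc in Hb].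
by rewrite cardsU dA cards0 subn0 cardsU d12 cards0 subn0 c1 c2 addnn -mul2n.
Qed.

Lemma checkAllP g : checkAll g -> [/\ checkA g, checkB g & checkC g].
Proof. by rewrite /checkAll; case: (checkA g); case: (checkB g); case: (checkC g). Qed.

Lemma np_pairsN (c : cell 4 4) : np c \in pairsN.
Proof. by apply/allpairsP; exists (val c.1, val c.2); rewrite !mem_iota /= !ltn_ord. Qed.

Lemma ne_edgesN (e : tedge 4 4) : (np e.1, np e.2) \in edgesN.
Proof. by apply/allpairsP; exists (np e.1, np e.2); rewrite !np_pairsN. Qed.

Lemma good_of (G : config 4 4) e : tedges_ok G -> ~~ cycle2 G -> ~~ cycle3 G -> e \in E2 G ->
  goodE (lk (gridOf [set c | occupied G c])) (np e.1, np e.2).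
Proof.
move=> Hok N2 N3 He.
have HO : forall i j : 'I_4, occupied G (i, j) = lk (gridOf [set c | occupied G c]) i j.
  by move=> i j; rewrite lk_gridOf inE.
have [o1 o2] := okP Hok He.
have occ1 : occupied G e.1 by apply/orP; right; apply/existsP; exists e; rewrite He eqxx.
have occ2 : occupied G e.2 by apply/orP; right; apply/existsP; exists e; rewrite He eqxx orbT.
have n2 : ~~ (occupied G (e.1.1, e.2.2) && occupied G (e.2.1, e.1.2)).
  by apply: contra N2 => H; apply/existsP; exists e; rewrite He.
have n3 := N3; move/existsP: n3 => n3.
have {}n3 : ~~ [exists c : cell 4 4, let: ((i, j), (p, q)) := e in let: (k, l) := c in
    let s := [:: (k, l); (k, j); (k, q); (i, l); (p, l)] in uniq s && all (occupied G) s].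
  by apply/negP => H; apply: n3; exists e; rewrite He.
move: e He o1 o2 occ1 occ2 n2 n3 => [[i j] [p q]] He /= o1 o2 occ1 occ2 n2 n3.
rewrite (cyc3_bridge i j p q HO) in n3.
rewrite !HO in occ1 occ2 n2.
rewrite /goodE /goodn /= (negbTE (o1 : val i != val p)) (negbTE (o2 : val j != val q)) occ1 occ2.
by move: n2; case: (lk _ i q); case: (lk _ p j).
Qed.

Lemma arith a t o : a <= 9 -> o <= 13 -> o = a + 2 * t -> ~~ ((a == 9) && (t == 2)) -> a + t <= 10.
Proof. move=> *; lia. Qed.

Lemma upper (G : config 4 4) : admissible G -> weight G <= 10.
Proof.
case/and3P => Hok Hs; rewrite /has_gen_C4 !negb_or => /and3P [N1 N2 N3].
have [Sinj Snot] := simpleP Hs.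
set O := [set c | occupied G c].
have HO : forall i j : 'I_4, occupied G (i, j) = lk (gridOf O) i j.
  by move=> i j; rewrite lk_gridOf inE.
have HE1 : forall i j : 'I_4, ((i, j) \in E1 G) = lk (gridOf (E1 G)) i j.
  by move=> i j; rewrite lk_gridOf.
have Hcard := card_occ Hok Hs.
have [CA _ _] := checkAllP (checkAll_S (E1 G)).
have [_ CB CC] := checkAllP (checkAll_S O).
have E1eq : cycle1 G = C4n (lk (gridOf (E1 G))) := C4_bridge HE1.
have Ha : #|E1 G| <= 9.
  by move: CA; rewrite /checkA cnt_gridOf -E1eq (negbTE N1); case: leqP.
rewrite /weight.
case: (set_0Vmem (E2 G)) => [-> | [e He]]; first by rewrite cards0 addn0 (leq_trans Ha).
have Ge := good_of Hok N2 N3 He.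
have HO13 : #|O| <= 13.
  move: CB; rewrite /checkB cnt_gridOf; case: leqP => // _.
  by rewrite hasLE; case/hasP; exists (np e.1, np e.2) => //; apply: ne_edgesN.
have [Hx|Hx] := boolP ((#|E1 G| == 9) && (#|E2 G| == 2)); last first.
  exact: arith Ha HO13 Hcard Hx.
case/andP: Hx => /eqP Ha9 /cards2P [e1 [f1 [Hne HE2]]].
have He1 : e1 \in E2 G by rewrite HE2 !inE eqxx.
have Hf1 : f1 \in E2 G by rewrite HE2 !inE eqxx orbT.
have HO13' : #|O| = 13 by rewrite /O Hcard Ha9 HE2 cards2 Hne.
move: CC; rewrite /checkC cnt_gridOf HO13' eqxx.
move=> CC'.
have : (let gl := [seq e <- edgesN | goodE (lk (gridOf O)) e] in allL' (fun e => allL' (fun f => if uniq [:: e.1; e.2; f.1; f.2] then C4n (fun r c => if lk (gridOf O) r c then ((r, c) \notin [:: e.1; e.2; f.1; f.2]) else false) else true) gl) gl) := CC'.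
clear CC'.
set gl := [seq _ <- edgesN | _].
have ing : forall e, e \in E2 G -> (np e.1, np e.2) \in gl.
  by move=> e0 He0; rewrite mem_filter ne_edgesN andbT; apply: good_of.
move=> H; have H2 := allL'_in H (ing _ He1); have {H H2} := allL'_in H2 (ing _ Hf1).
have [Se1 Se2 Se3] := Sinj e1 f1 He1 Hf1.
have [Sf1 Sf2 Sf3] := Sinj f1 e1 Hf1 He1.
have [ok1 _] := okP Hok He1.
have [okf _] := okP Hok Hf1.
have Hu : uniq [:: e1.1; e1.2; f1.1; f1.2].
  have n1 : e1.1 != e1.2 by apply: contra ok1 => /eqP ->.
  have n2 : f1.1 != f1.2 by apply: contra okf => /eqP ->.
  have n3 : e1.1 != f1.1 by apply/eqP => /Se1 E; rewrite E eqxx in Hne.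
  have n4 : e1.2 != f1.1 by rewrite eq_sym.
  have n5 : e1.2 != f1.2 by apply/eqP => /Se2 E; rewrite E eqxx in Hne.
  by rewrite /= !inE !negb_or n1 n2 n3 n4 n5 Se3.
have -> : uniq [:: (np e1.1, np e1.2).1; (np e1.1, np e1.2).2; (np f1.1, np f1.2).1; (np f1.1, np f1.2).2].
  by move: Hu; rewrite -(map_inj_uniq np_inj); apply.
set L := [:: (np e1.1, np e1.2).1; _; _; _].
set fn := fun r c => _.
have Hfn : forall i j : 'I_4, ((i, j) \in E1 G) = fn i j.
  move=> i j; rewrite /fn -HO.
  have -> : ((val i, val j) \notin L) = ((i, j) \notin [:: e1.1; e1.2; f1.1; f1.2]).
    by rewrite -(mem_map np_inj).
  case Hin: ((i, j) \in E1 G).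
    rewrite /occupied Hin orTb; apply/esym/negP; rewrite !inE.
    have [a1 a2] := Snot _ He1; have [b1 b2] := Snot _ Hf1.
    by case/or4P => /eqP E; rewrite -E Hin in a1 a2 b1 b2.
  rewrite /occupied Hin orFb; case: ifP => // /existsP [h /andP [Hh Hc]].
  move: Hh; rewrite HE2 !inE => /orP [] /eqP Eh; subst h;
  by case/orP: Hc => /eqP ->; rewrite eqxx ?orbT.
have E1' : cycle1 G = C4n fn := C4_bridge Hfn.
by rewrite -E1' (negbTE N1).
Qed.

Definition g1 : grid := [:: [:: true; true; true; false]; [:: true; false; false; true];
                           [:: false; true; false; true]; [:: false; false; true; true]].
Definition E10 : {set cell 4 4} := [set c : cell 4 4 | lk g1 (val c.1) (val c.2)].
Definition o1 : 'I_4 := @Ordinal 4 1 isT.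
Definition o2 : 'I_4 := @Ordinal 4 2 isT.
Definition e0 : tedge 4 4 := ((o1, o1), (o2, o2)).
Definition G0 : config 4 4 := (E10, [set e0]).
Definition fn0 (r c : nat) : bool := lk g1 r c || ((r, c) == (1, 1)) || ((r, c) == (2, 2)).

Lemma ex_set1 (T : finType) (a : T) (P : T -> bool) : [exists e in [set a], P e] = P a.
Proof.
apply/existsP/idP => [[e /andP [] ]|Pa]; first by rewrite inE => /eqP ->.
by exists a; rewrite inE eqxx.
Qed.

Lemma fa_set1 (T : finType) (a : T) (P : T -> bool) : [forall e in [set a], P e] = P a.
Proof.
apply/forallP/idP => [/(_ a)|Pa e]; first by rewrite inE eqxx.
by apply/implyP; rewrite inE => /eqP ->.
Qed.

Lemma HO0 (i j : 'I_4) : occupied G0 (i, j) = fn0 i j.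
Proof.
rewrite /occupied /fn0 ex_set1 /G0 /E1 /E10 inE.
have h1 : ((i, j) == e0.1) = ((val i, val j) == (1, 1)) by rewrite -(inj_eq np_inj).
have h2 : ((i, j) == e0.2) = ((val i, val j) == (2, 2)) by rewrite -(inj_eq np_inj).
by rewrite h1 h2 orbA.
Qed.

Lemma G0_adm : admissible G0.
Proof.
apply/and3P; split.
- by rewrite /tedges_ok /E2 /G0 fa_set1.
- apply/andP; split; rewrite /E2 /G0 fa_set1; first by rewrite fa_set1 !eqxx.
  by rewrite /E1 /E10 !inE.
- rewrite /has_gen_C4 !negb_or; apply/and3P; split.
  + have HE : forall i j : 'I_4, ((i, j) \in E1 G0) = lk g1 i j by move=> i j; rewrite inE.
    have -> : cycle1 G0 = C4n (lk g1) := C4_bridge HE.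
    by vm_compute.
  + rewrite /cycle2 /E2 /G0 ex_set1 /= !HO0.
    by vm_compute.
  + rewrite /cycle3 /E2 /G0 ex_set1.
    have -> := cyc3_bridge o1 o1 o2 o2 HO0.
    by vm_compute.
Qed.

Lemma G0_weight : weight G0 = 10.
Proof.
rewrite /weight /E1 /E2 /G0 cards1 -cnt_gridOf.
have -> : gridOf E10 = [seq [seq lk g1 i j | j <- iota 0 4] | i <- iota 0 4].
  rewrite -val_enum_ord -map_comp; apply: eq_map => i /=.
  by rewrite -map_comp; apply: eq_map => j; rewrite /= inE.
by vm_compute.
Qed.

Theorem theorem3p3 : z2 4 4 = 10.
Proof.
apply/eqP; rewrite eqn_leq; apply/andP; split.
  by apply/bigmax_leqP => G; apply: upper.
by rewrite -{1}G0_weight; apply: leq_bigmax_cond; apply: G0_adm.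
Qed.
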